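(* Let $K$ and $L$ be fields, let $\overline{L}$ be an algebraic closure of $L$, and let $q\colon K\to L$ be a multiplicative quadratic map. Then there exist field monomorphisms $\varphi_1,\varphi_2\colon K\to\overline{L}$ such that $q(a)=\varphi_1(a)\,\varphi_2(a)$ for all $a\in K$.
   Context: Let $K,L$ be rings with identity. A map $q\colon K\to L$ is called a multiplicative quadratic map if (i) $q(ab)=q(a)q(b)$ for all $a,b\in K$; (ii) $q(n\cdot 1_K)=n^2\cdot 1_L$ for all $n\in\mathbb{Z}$; (iii) the map $f\colon K\times K\to L$, $f(a,b)=q(a+b)-q(a)-q(b)$, is biadditive. *)

(* Defs.v *)
From HB Require Import structures.
From mathcomp Require Import all_boot all_order all_algebra.
Set Implicit Arguments. Unset Strict Implicit. Unset Printing Implicit Defensive.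
Import GRing.Theory.
Local Open Scope ring_scope.

Definition mult_quadratic_map (K L : nzRingType) (q : K -> L) : Prop :=
  [/\ (forall a b : K, q (a * b) = q a * q b),
      (forall n : int, q (n%:~R) = (n ^+ 2)%:~R)
    & (let f := fun a b : K => q (a + b) - q a - q b in
       (forall a b c : K, f (a + b) c = f a c + f b c) /\
       (forall a b c : K, f a (b + c) = f a b + f a c))].

(* Lbar, together with an embedding iota : L -> Lbar, is an algebraic
   closure of L: Lbar is algebraically closed and algebraic over iota(L). *)
Definition is_algebraic_closure (L : fieldType) (Lbar : closedFieldType)
  (iota : {rmorphism L -> Lbar}) : Prop :=
  forall x : Lbar, exists p : {poly L}, p != 0 /\ root (map_poly iota p) x.

(* Main.v *)
Require Import Defs.
From HB Require Import structures.
From mathcomp Require Import all_boot all_order all_algebra.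
From mathcomp Require Import ring.
From Stdlib Require Import Classical.
Import GRing.Theory.
Local Open Scope ring_scope.

Lemma mk_rmorph (K R : nzRingType) (f : K -> R) :
  f 1 = 1 -> {morph f : x y / x + y} -> {morph f : x y / x * y} ->
  exists g : {rmorphism K -> R}, forall x, g x = f x.
Proof.
move=> f1 fD fM.
have f0 : f 0 = 0 by apply: (@addrI _ (f 0)); rewrite -fD !addr0.
pose g : {rmorphism K -> R} := HB.pack f (GRing.isNmodMorphism.Build _ _ f (f0, fD))
   (GRing.isMonoidMorphism.Build _ _ f (f1, fM)).
by exists g.
Qed.

Lemma keyA (R : comNzRingType) (A B P Ta Tb Tab Fab tc qc u S X1 X2 : R) :
  Tab - Ta*Tb + Fab = 0 -> A*B - S - qc*Fab = 0 -> S - P*tc + Tab*qc = 0 ->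
  Ta*B - P - X1 = 0 -> Tb*A - P - X2 = 0 -> X1 + X2 - Fab*tc = 0 ->
  u^+2 - tc*u + qc = 0 ->
  (P - u*Tab)*(tc - 2*u) = (A - u*Ta)*(B - u*Tb).
Proof.
move=> e1 e2 e3 e4 e5 e6 er; apply/eqP; rewrite -subr_eq0; apply/eqP.
have -> : (P - u*Tab)*(tc - 2*u) - (A - u*Ta)*(B - u*Tb) =
  u^+2 * (Tab - Ta*Tb + Fab) - (A*B - S - qc*Fab) - (S - P*tc + Tab*qc)
  + u * ((Ta*B - P - X1) + (Tb*A - P - X2) + (X1 + X2 - Fab*tc))
  + (Tab - Fab) * (u^+2 - tc*u + qc) by ring.
by rewrite e1 e2 e3 e4 e5 e6 er; ring.
Qed.

Lemma keyB (R : comNzRingType) (A S2 Z M Ta2 N qa qc Ta tc u : R) :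
  S2 + Z - A*A = 0 -> Z - 2*qa*qc = 0 -> S2 - M*tc + Ta2*qc = 0 ->
  M + N - A*Ta = 0 -> N - tc*qa = 0 -> Ta2 - Ta*Ta + 2*qa = 0 ->
  u^+2 - tc*u + qc = 0 ->
  (A - u*Ta)*(A - (tc-u)*Ta) + qa*(tc-2*u)^+2 = 0.
Proof.
move=> h1 h2 h3 h4 h5 h6 er.
have -> : (A - u*Ta)*(A - (tc-u)*Ta) + qa*(tc-2*u)^+2 =
  - (S2 + Z - A*A) + (Z - 2*qa*qc) + (S2 - M*tc + Ta2*qc) + tc*(M + N - A*Ta)
  - tc*(N - tc*qa) - qc*(Ta2 - Ta*Ta + 2*qa) + (u^+2 - tc*u + qc)*(4*qa - Ta*Ta) by ring.
by rewrite h1 h2 h3 h4 h5 h6 er; ring.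
Qed.

Arguments keyA {R A B P Ta Tb Tab Fab tc qc u S X1 X2}.
Arguments keyB {R A S2 Z M Ta2 N qa qc Ta tc u}.
Definition fq {K L : fieldType} (q : K -> L) a b := locked (q (a + b) - q a - q b).
Lemma fqE (K L : fieldType) (q : K -> L) a b : fq q a b = q (a + b) - q a - q b.
Proof. by rewrite /fq -lock. Qed.

Section S.
Variables (K L : fieldType) (q : K -> L).
Hypothesis qM : forall a b, q (a * b) = q a * q b.
Hypothesis qn : forall n : int, q (n%:~R) = (n ^+ 2)%:~R.
Local Notation f := (fq q).
Hypothesis fDl : forall a b c, f (a + b) c = f a c + f b c.
Local Notation t a := (fq q a 1).

Lemma q0 : q 0 = 0.
Proof using qM qn fDl. by have := qn 0; rewrite expr0n /=. Qed.
Lemma q1 : q 1 = 1.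
Proof using qM qn fDl. by have := qn 1; rewrite expr1n. Qed.
Lemma q2 : q (1 + 1) = 4.
Proof using qM qn fDl. have := qn 2. rewrite -[(2%:Z)%:~R]/(1 *+ 2) mulr2n => ->. by []. Qed.
Lemma fC a b : f a b = f b a.
Proof using qM qn fDl. by rewrite !fqE [b + a]addrC; ring. Qed.
Lemma fDr a b c : f c (a + b) = f c a + f c b.
Proof using qM qn fDl. by rewrite fC fDl (fC a) (fC b). Qed.
Lemma fMz x y z : f (x * z) (y * z) = f x y * q z.
Proof using qM qn fDl. by rewrite !fqE -mulrDl !qM; ring. Qed.
Lemma qD a b : q (a + b) = q a + q b + f a b.
Proof using qM qn fDl. rewrite !fqE; ring. Qed.
Lemma G a b c d : f (a*b) (c*d) + f (a*d) (c*b) = f a c * f b d.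
Proof using qM qn fDl.
have E := fMz b d (a + c).
rewrite !mulrDr fDl !fDr fMz (fMz b d c) qD in E.
have -> : f (a*b) (c*d) = f (b*a) (d*c) by rewrite (mulrC a) (mulrC c).
have -> : f (a*d) (c*b) = f (b*c) (d*a) by rewrite fC (mulrC a) (mulrC c).
apply: (@addrI _ (f b d * q a + f b d * q c)).
transitivity (f b d * (q a + q c + f a c)); last by ring.
rewrite -E; ring.
Qed.
Lemma t1 : t 1 = 2.
Proof using qM qn fDl. by rewrite !fqE q2 q1; ring. Qed.
Lemma faa a : f a a = 2 * q a.
Proof using qM qn fDl. rewrite !fqE; have -> : a + a = (1 + 1) * a by rewrite mulrDl mul1r. rewrite qM q2; ring. Qed.
Lemma tM a b : t (a * b) - t a * t b + f a b = 0.
Proof using qM qn fDl. have := G a b 1 1; rewrite !mulr1 mul1r fC => <-; ring. Qed.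
Lemma E2 a b c : f a c * f b c - f (a*b) (c*c) - q c * f a b = 0.
Proof using qM qn fDl. have := G a b c c; rewrite [c * b]mulrC fMz => <-; ring. Qed.
Lemma E3 x c : f x (c*c) - f x c * t c + t x * q c = 0.
Proof using qM qn fDl.
have := G x 1 c c; rewrite !mulr1 (fC 1 c).
have -> : f (x*c) c = f x 1 * q c by rewrite -fMz mul1r.
move=> <-; ring.
Qed.
Lemma E4 a b c : t a * f b c - f (a*b) c - f (a*c) b = 0.
Proof using qM qn fDl. have := G a b 1 c; rewrite !mul1r => <-; ring. Qed.
Lemma E5 a b c : t b * f a c - f (a*b) c - f a (b*c) = 0.
Proof using qM qn fDl. have := G b a 1 c; rewrite !mul1r [b * a]mulrC (fC (b * c)) => <-; ring. Qed.
Lemma E6 a b c : f (a*c) b + f a (b*c) - f a b * t c = 0.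
Proof using qM qn fDl. have := G a c b 1; rewrite !mulr1 (fC c 1) => <-; ring. Qed.
Lemma H1 a c : f (a*a) (c*c) + f (a*c) (a*c) - f a c * f a c = 0.
Proof using qM qn fDl. have := G a a c c; rewrite [c * a]mulrC => <-; ring. Qed.
Lemma H2 a c : f (a*c) (a*c) - 2 * q a * q c = 0.
Proof using qM qn fDl. rewrite faa qM; ring. Qed.
Lemma H4 a c : f (a*a) c + f a (c*a) - f a c * t a = 0.
Proof using qM qn fDl. have := G a a c 1; rewrite !mulr1 => <-; ring. Qed.
Lemma H5 a c : f a (c*a) - t c * q a = 0.
Proof using qM qn fDl. rewrite -{1}[a]mul1r fMz (fC 1 c); ring. Qed.
Lemma H6 a : t (a*a) - t a * t a + 2 * q a = 0.
Proof using qM qn fDl. have := tM a a; rewrite faa => <-; ring. Qed.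
End S.


Section Main.
Variables (K L : fieldType) (Lbar : closedFieldType) (iota : {rmorphism L -> Lbar}) (q : K -> L).
Hypothesis qM : forall a b, q (a * b) = q a * q b.
Hypothesis qn : forall n : int, q (n%:~R) = (n ^+ 2)%:~R.
Hypothesis fDl : forall a b c, fq q (a + b) c = fq q a c + fq q b c.
Local Notation F a b := (iota (fq q a b)).
Local Notation T a := (iota (fq q a 1)).
Local Notation Q a := (iota (q a)).

Local Notation A_ X := (X _ _ q qM qn fDl).
Ltac mp H := move/(congr1 iota): H; rewrite ?(rmorph_nat, rmorph0, rmorphB, rmorphD, rmorphM, rmorphN).

Lemma phiA c r : r^+2 - T c * r + Q c = 0 -> T c - 2*r != 0 ->
  exists g : {rmorphism K -> Lbar}, forall a, g a = (F a c - r * T a) / (T c - 2*r).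
Proof.
move=> hr hw; apply: mk_rmorph.
- by rewrite (A_ fC) (A_ t1) rmorph_nat [r * 2]mulrC divff.
- move=> a b /=; rewrite !fDl !rmorphD -mulrDl; congr (_ * _); ring.
move=> a b /=.
have e1 := (A_ tM) a b; mp e1 => e1.
have e2 := (A_ E2) a b c; mp e2 => e2.
have e3 := (A_ E3) (a*b) c; mp e3 => e3.
have e4 := (A_ E4) a b c; mp e4 => e4.
have e5 := (A_ E5) a b c; mp e5 => e5.
have e6 := (A_ E6) a b c; mp e6 => e6.
have := keyA e1 e2 e3 e4 e5 e6 hr => key.
rewrite (_ : (F a c - r * T a) / (T c - 2 * r) * ((F b c - r * T b) / (T c - 2 * r))
   = ((F a c - r * T a) * (F b c - r * T b)) / ((T c - 2 * r) * (T c - 2*r))); last by field.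
by rewrite -key; field.
Qed.

Lemma prodA c u a : u^+2 - T c * u + Q c = 0 -> T c - 2*u != 0 ->
  Q a = (F a c - u * T a) / (T c - 2*u) *
        ((F a c - (T c - u) * T a) / (T c - 2*(T c - u))).
Proof.
move=> hr hw.
have h1 := (A_ H1) a c; mp h1 => h1.
have h2 := (A_ H2) a c; mp h2 => h2.
have h3 := (A_ E3) (a*a) c; mp h3 => h3.
have h4 := (A_ H4) a c; mp h4 => h4.
have h5 := (A_ H5) a c; mp h5 => h5.
have h6 := (A_ H6) a; mp h6 => h6.
have key := keyB h1 h2 h3 h4 h5 h6 hr.
have -> : T c - 2 * (T c - u) = - (T c - 2 * u) by ring.
rewrite mulf_div.
have -> : (F a c - u * T a) * (F a c - (T c - u) * T a) = - (Q a * (T c - 2*u)^+2).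
  by apply/eqP; rewrite -subr_eq0 opprK key.
by field; rewrite oppr_eq0 hw.
Qed.

Lemma caseA c : fq q c 1 ^+ 2 - 4 * q c != 0 ->
  exists phi1 phi2 : {rmorphism K -> Lbar},
    [/\ injective phi1, injective phi2 &
        forall a : K, iota (q a) = phi1 a * phi2 a].
Proof.
move=> hd.
have [u hu] := @solve_monicpoly Lbar 2 (fun i => if i == 0%N then - Q c else T c) isT.
rewrite !big_ord_recr big_ord0 /= expr0 expr1 add0r mulr1 in hu.
have hr : u^+2 - T c * u + Q c = 0 by rewrite hu; ring.
have hv : (T c - u)^+2 - T c * (T c - u) + Q c = 0.
  by rewrite -hr; ring.
have hw : T c - 2 * u != 0.
  apply: contra hd => /eqP hw.
  have : (T c - 2*u)^+2 = iota (fq q c 1 ^+ 2 - 4 * q c) + 4 * (u^+2 - T c * u + Q c).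
    by rewrite !(rmorph_nat, rmorphB, rmorphM, rmorphXn); ring.
  by rewrite hw hr expr0n /= mulr0 addr0 => /esym/eqP; rewrite fmorph_eq0.
have hw' : T c - 2 * (T c - u) != 0.
  by rewrite (_ : T c - 2 * (T c - u) = - (T c - 2 * u)) ?oppr_eq0 //; ring.
have [g1 Hg1] := phiA c u hr hw.
have [g2 Hg2] := phiA c (T c - u) hv hw'.
exists g1, g2; split; [exact: fmorph_inj | exact: fmorph_inj|].
by move=> a; rewrite Hg1 Hg2 -(prodA c u a hr hw).
Qed.

Lemma caseB1 : (2:L) != 0 -> (forall c, fq q c 1 ^+ 2 - 4 * q c = 0) ->
  exists phi1 phi2 : {rmorphism K -> Lbar},
    [/\ injective phi1, injective phi2 &
        forall a : K, iota (q a) = phi1 a * phi2 a].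
Proof.
move=> h2 hall.
have tt a b : fq q a 1 * fq q b 1 = 2 * fq q a b.
  have := hall (a + b); rewrite fDl (A_ qD) => e.
  have : 2 * (fq q a 1 * fq q b 1 - 2 * fq q a b) = 0.
    transitivity ((fq q a 1 + fq q b 1) ^+ 2 - 4 * (q a + q b + fq q a b)
       - (fq q a 1 ^+ 2 - 4 * q a) - (fq q b 1 ^+ 2 - 4 * q b)); first by ring.
    by rewrite e !hall; ring.
  by move/eqP; rewrite mulf_eq0 (negbTE h2) /= subr_eq0 => /eqP.
have tab a b : fq q (a * b) 1 = fq q a 1 * fq q b 1 - fq q a b.
  by apply/eqP; rewrite -subr_eq0 -((A_ tM) a b); apply/eqP; ring.
have [g Hg] : exists g : {rmorphism K -> Lbar}, forall x, g x = iota (fq q x 1 / 2).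
  apply: mk_rmorph.
- by rewrite (A_ t1) divff // rmorph1.
- by move=> a b /=; rewrite -rmorphD fDl mulrDl.
- move=> a b /=; rewrite -rmorphM; congr (iota _).
  rewrite tab.
  have -> : fq q a 1 / 2 * (fq q b 1 / 2) = (fq q a 1 * fq q b 1) / 2 / 2 by field.
  by rewrite tt; field.
exists g, g; split; [exact: fmorph_inj | exact: fmorph_inj|].
move=> a; rewrite Hg -rmorphM; congr (iota _).
have : fq q a 1 ^+ 2 = 4 * q a by apply/eqP; rewrite -subr_eq0 hall.
move=> e.
have -> : fq q a 1 / 2 * (fq q a 1 / 2) = fq q a 1 ^+ 2 / 2 / 2 by field.
by rewrite e; field.
Qed.

Lemma caseB2 : (2:L) = 0 -> (forall c, fq q c 1 ^+ 2 - 4 * q c = 0) ->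
  exists phi1 phi2 : {rmorphism K -> Lbar},
    [/\ injective phi1, injective phi2 &
        forall a : K, iota (q a) = phi1 a * phi2 a].
Proof.
move=> h2 hall.
have tz a : fq q a 1 = 0.
  have := hall a; rewrite (_ : 4 = 2 * 2 :> L); last by ring.
  rewrite h2 !mul0r subr0 => /eqP; rewrite expf_eq0 /= => /eqP //.
have qadd a b : q (a + b) = q a + q b.
  rewrite (A_ qD); have := (A_ tM) a b; rewrite !tz mul0r subr0 add0r => ->.
  by rewrite addr0.
have h2' : (2 : Lbar) = 0 by rewrite -(rmorph_nat iota 2) h2 rmorph0.
have hs (y : Lbar) : exists x, x * x == y.
  have [x hx] := @solve_monicpoly Lbar 2 (fun i => if i == 0%N then y else 0) isT.
  exists x; rewrite !big_ord_recr big_ord0 /= expr0 in hx.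
  by rewrite -expr2 hx; apply/eqP; ring.
pose s y := xchoose (hs y).
have hsq y : s y * s y = y by apply/eqP; exact: xchooseP (hs y).
have sqi (x y : Lbar) : x * x = y * y -> x = y.
  move=> e; apply/eqP; rewrite -subr_eq0 -[x - y == 0]orbb -mulf_eq0.
  apply/eqP; transitivity (x * x - y * y + 2 * (y * y - x * y)); first by ring.
  by rewrite e h2' mul0r subrr addr0.
have [g Hg] : exists g : {rmorphism K -> Lbar}, forall x, g x = s (iota (q x)).
  apply: mk_rmorph.
  - by apply: sqi; rewrite hsq (A_ q1) rmorph1 mulr1.
  - move=> a b /=; apply: sqi; rewrite hsq qadd rmorphD.
    transitivity (s (Q a) * s (Q a) + s (Q b) * s (Q b) + 2 * (s (Q a) * s (Q b))).
      by rewrite !hsq h2' mul0r addr0.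
    ring.
  - move=> a b /=; apply: sqi; rewrite hsq qM rmorphM.
    transitivity ((s (Q a) * s (Q a)) * (s (Q b) * s (Q b))); first by rewrite !hsq.
    ring.
exists g, g; split; [exact: fmorph_inj | exact: fmorph_inj|].
by move=> a; rewrite Hg hsq.
Qed.
End Main.

Theorem corollary1p3 (K L : fieldType) (Lbar : closedFieldType)
  (iota : {rmorphism L -> Lbar}) (hcl : is_algebraic_closure iota)
  (q : K -> L) (hq : mult_quadratic_map q) :
  exists phi1 phi2 : {rmorphism K -> Lbar},
    [/\ injective phi1, injective phi2 &
        forall a : K, iota (q a) = phi1 a * phi2 a].
Proof.
case: hq => qM qn [fDl0 _].
have fDl : forall a b c, fq q (a + b) c = fq q a c + fq q b c.
  by move=> a b c; rewrite !fqE; exact: fDl0.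
have [[c hc]|hn] := classic (exists c, fq q c 1 ^+ 2 - 4 * q c != 0).
  exact: (@caseA K L Lbar iota q qM qn fDl c hc).
have hall c : fq q c 1 ^+ 2 - 4 * q c = 0.
  by apply/eqP; apply: contraT => h; exfalso; apply: hn; exists c.
have [h2|h2] := eqVneq (2 : L) 0.
  exact: (@caseB2 K L Lbar iota q qM qn fDl h2 hall).
exact: (@caseB1 K L Lbar iota q qM qn fDl h2 hall).
Qed.
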